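(* Let $0<\varepsilon,\delta\le 1$ and let $V_A,V_S$ be finite sets. There exists a constant $C>0$, depending only on $\mathrm{card}(V_A)$, $\mathrm{card}(V_S)$, $\varepsilon$ and $\delta$, such that the following holds. Let $(X,m)$ be a measure space with $m(X)=1$, and let $[[\cdot]],[[\cdot]]'\colon V_A\cup V_S\to\mathfrak{M}$ be two $\varepsilon$-granular data maps such that $\mathcal{S}_\delta([[\cdot]])=\mathcal{S}_\delta([[\cdot]]')$. Then \[ \textsf{barcode-dist}\big(\mathcal{F}_\delta([[\cdot]]),\mathcal{F}_\delta([[\cdot]]')\big)\le C\cdot \textsf{data-dist}([[\cdot]],[[\cdot]]'). \]
   Context: $(X,m)$ is a measure space with $m(X)=1$ and $\mathfrak{M}$ is the set of its measurable subsets. $V_A$ and $V_S$ are finite sets. A data map is any map $[[\cdot]]\colon V_A\cup V_S\to\mathfrak{M}$; it is $\varepsilon$-granular if $m([[v]])>\varepsilon$ for every $v\in V_A\cup V_S$. A sequent $\Gamma\vdash\Delta$ is a pair $(\Gamma,\Delta)$ with $\Gamma\subseteq V_A$, $\Delta\subseteq V_S$; the set $\mathcal{S}$ of all sequents is partially ordered by $(\Gamma\vdash\Delta)\preceq(\Gamma'\vdash\Delta')$ iff $\Gamma\subseteq\Gamma'$ and $\Delta\subseteq\Delta'$. For a data map write $A_\Gamma=\bigcap_{a\in\Gamma}[[a]]$ (equal to $X$ if $\Gamma=\emptyset$) and $U_\Delta=\bigcup_{x\in\Delta}[[x]]$ (equal to $\emptyset$ if $\Delta=\emptyset$). For $t\in[0,1]$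 let \[\mathcal{S}'_t([[\cdot]])=\{(\Gamma\vdash\Delta)\in\mathcal{S} : m(A_\Gamma\cap U_\Delta)/m(A_\Gamma)\ge 1-t\}.\] These subposets increase with $t$ and $\mathcal{S}'_1([[\cdot]])=\mathcal{S}$. For $0\le\delta\le1$ let $\mathcal{S}_\delta([[\cdot]])$ be the set of sequents $\Gamma\vdash\Delta$ with $m(A_\Gamma)/m([[a]])>\delta$ for every $a\in\Gamma$. Let $\mathcal{F}_\delta([[\cdot]])$ be the filtration $(\mathcal{S}'_t([[\cdot]])\cap\mathcal{S}_\delta([[\cdot]]))_{t\in[0,1]}$ of the poset $\mathcal{S}_\delta([[\cdot]])$, where each member carries the induced order. For a filtration $\mathcal{F}=(P_t)_{t\in[0,1]}$ of a finite poset $P$ (meaning $P_t\subseteq P_{t'}$ for $t\le t'$, with $P_1=P$), and for $p\in P$, set $I_p(\mathcal{F})=\{t\in[0,1]: p \text{ is a minimal element of } P_t\}$. For two filtrations $\mathcal{F},\mathcal{F}'$ of the same poset $P$, \[\textsf{barcode-dist}(\mathcal{F},\mathcal{F}')=\sum_{p\in P}|I_p(\mathcal{F})\,\triangle\, I_p(\mathcal{F}')|,\] where $\triangle$ denotes symmetric difference and $|\cdot|$ denotes Lebesgue measure. For two data maps, \[\textsf{data-dist}([[\cdot]],[[\cdot]]')=\sum_{v\in V_A\cup V_S} m([[v]]\triangle[[v]]').\] *)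

(* Defs.v *)
From HB Require Import structures.
From mathcomp Require Import all_boot all_order all_algebra.
From mathcomp Require Import all_classical all_reals all_analysis.
Set Implicit Arguments. Unset Strict Implicit. Unset Printing Implicit Defensive.
Import Order.TTheory GRing.Theory Num.Theory.
Local Open Scope classical_set_scope.
Local Open Scope ring_scope.

Section Sequents.
Variables (R : realType) (VA VS : finType).
Variables (d : measure_display) (T : measurableType d).

Definition sequent := ({set VA} * {set VS})%type.

Definition seq_le (p q : sequent) : bool := (p.1 \subset q.1) && (p.2 \subset q.2).
Definition seq_lt (p q : sequent) : bool := seq_le p q && (p != q).

(* a data map on V_A ∪ V_S (disjoint union) *)
Variable mu : {measure set T -> \bar R}.
Variable D : (VA + VS)%type -> set T.

Definition granular (eps : R) : Prop := forall v, (eps%:E < mu (D v))%E.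

Definition A_ (G : {set VA}) : set T := [set x | forall a, a \in G -> D (inl a) x].
Definition U_ (De : {set VS}) : set T := [set x | exists2 s, s \in De & D (inr s) x].

(* m(A_Γ ∩ U_Δ) / m(A_Γ) (measures are finite since m(X)=1) *)
Definition ratio (p : sequent) : R :=
  fine (mu (A_ p.1 `&` U_ p.2)) / fine (mu (A_ p.1)).

Definition inSprime (t : R) (p : sequent) : bool := 1 - t <= ratio p.

Definition inSdelta (delta : R) (p : sequent) : bool :=
  [forall a, (a \in p.1) ==> (delta < fine (mu (A_ p.1)) / fine (mu (D (inl a)))) ].

Definition Fdelta (delta t : R) (p : sequent) : bool :=
  inSprime t p && inSdelta delta p.

Definition is_minimal (delta t : R) (p : sequent) : Prop :=
  Fdelta delta t p /\ forall q : sequent, Fdelta delta t q -> ~~ seq_lt q p.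

Definition Ip (delta : R) (p : sequent) : set R :=
  [set t | 0 <= t <= 1 /\ is_minimal delta t p].

End Sequents.

Definition symdiff (U : Type) (A B : set U) : set U := (A `\` B) `|` (B `\` A).

(* barcode-dist(F_delta(D), F_delta(D')), summing over the common poset S_delta(D) *)
Definition barcode_dist (R : realType) (VA VS : finType) (d : measure_display)
  (T : measurableType d) (mu : {measure set T -> \bar R})
  (D D' : (VA + VS)%type -> set T) (delta : R) : \bar R :=
  (\sum_(p : sequent VA VS | inSdelta mu D delta p)
     lebesgue_measure (symdiff (Ip mu D delta p) (Ip mu D' delta p)))%E.

Definition data_dist (R : realType) (VA VS : finType) (d : measure_display)
  (T : measurableType d) (mu : {measure set T -> \bar R})
  (D D' : (VA + VS)%type -> set T) : \bar R :=
  (\sum_(v : (VA + VS)%type) mu (symdiff (D v) (D' v)))%E.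

(* Main.v *)
Require Import Defs.
From HB Require Import structures.
From mathcomp Require Import all_boot all_order all_algebra.
From mathcomp Require Import all_classical all_reals all_analysis.
From mathcomp Require Import lra ring.
Import Order.TTheory GRing.Theory Num.Theory.
Local Open Scope classical_set_scope.
Local Open Scope ring_scope.
Set Implicit Arguments. Unset Strict Implicit.

Lemma leb_mono (R : realType) (A B : set R) : A `<=` B -> (lebesgue_measure A <= lebesgue_measure B)%E.
Proof.
move=> AB. rewrite /lebesgue_measure /lebesgue_stieltjes_measure /measure_extension.
exact: le_outer_measure.
Qed.

Lemma card_setT (T : finType) : (#|{: {set T}}| = 2 ^ #|T|)%N.
Proof.
rewrite -cardsT -card_powerset; apply: eq_card => S.
by rewrite powersetE !inE; symmetry; apply/fintype.subsetP => x; rewrite inE.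
Qed.

Lemma mu_bigU_le d (T : measurableType d) (R : realType) (mu : {measure set T -> \bar R})
  (I : Type) (r : seq I) (P : pred I) (F : I -> set T) :
  (forall i, measurable (F i)) ->
  (mu (\big[setU/set0]_(i <- r | P i) F i) <= \sum_(i <- r | P i) mu (F i))%E.
Proof.
move=> mF; elim: r => [|i r IH]; first by rewrite !big_nil measure0.
rewrite !big_cons; case: (P i) => //.
apply: (le_trans (measureU2 _ _ _)) => //; first exact: bigsetU_measurable.
exact: leeD.
Qed.

Lemma mu_fin d (T : measurableType d) (R : realType) (mu : {measure set T -> \bar R})
  (A : set T) : mu setT = 1%E -> measurable A -> (fine (mu A))%:E = mu A.
Proof.
move=> H1 mA; apply: fineK; rewrite ge0_fin_numE //.
have h : (mu A <= mu setT)%E by apply: le_measure; rewrite ?inE //.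
by rewrite H1 in h; apply: (le_lt_trans h); rewrite ltry.
Qed.

Lemma mu_fine_ge0 d (T : measurableType d) (R : realType) (mu : {measure set T -> \bar R})
  (A : set T) : 0 <= fine (mu A).
Proof. exact: fine_ge0. Qed.


Lemma symdiff_meas d (T : measurableType d) (A B : set T) :
  measurable A -> measurable B -> measurable (symdiff A B).
Proof. by move=> mA mB; apply: measurableU; apply: measurableD. Qed.

Lemma mdiff d (T : measurableType d) (R : realType) (mu : {measure set T -> \bar R})
  (A B : set T) : mu setT = 1%E -> measurable A -> measurable B ->
  `|fine (mu A) - fine (mu B)| <= fine (mu (symdiff A B)).
Proof.
move=> H1 mA mB.
have mS := symdiff_meas mA mB.
have key : forall X Y : set T, measurable X -> measurable Y ->
    (fine (mu X) <= fine (mu Y) + fine (mu (symdiff X Y))).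
  move=> X Y mX mY; have mSXY := symdiff_meas mX mY.
  rewrite -lee_fin EFinD !mu_fin //.
  apply: (le_trans (le_measure _ _ _ (_ : X `<=` Y `|` symdiff X Y))).
  - by rewrite inE.
  - by rewrite inE; apply: measurableU.
  - by move=> x Xx; case: (pselect (Y x)) => Yx; [left|right; left].
  exact: measureU2.
have sC : symdiff B A = symdiff A B by rewrite /symdiff setUC.
have h1 := key A B mA mB; have h2 := key B A mB mA; rewrite sC in h2.
rewrite ler_norml; apply/andP; split; lra.
Qed.

Lemma A_meas (VA VS : finType) d (T : measurableType d) (D : (VA + VS)%type -> set T) G :
  (forall v, measurable (D v)) -> measurable (A_ D G).
Proof.
move=> mD; have -> : A_ D G = \bigcap_(a in [set a | a \in G]) D (inl a) by [].
by apply: fin_bigcap_measurable => //; exact: finite_finset.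
Qed.

Lemma U_meas (VA VS : finType) d (T : measurableType d) (D : (VA + VS)%type -> set T) G :
  (forall v, measurable (D v)) -> measurable (U_ D G).
Proof.
move=> mD; have -> : U_ D G = \bigcup_(a in [set a | a \in G]) D (inr a) by [].
by apply: fin_bigcup_measurable => //; exact: finite_finset.
Qed.

Lemma in_bigUP (I : finType) (U : Type) (P : pred I) (F : I -> set U) (i : I) (x : U) :
  P i -> F i x -> (\big[setU/set0]_(j | P j) F j) x.
Proof. by move=> Pi Fx; rewrite (bigD1 i) //=; left. Qed.

Lemma in_bigU (I : finType) (U : Type) (F : I -> set U) (i : I) (x : U) :
  F i x -> (\big[setU/set0]_(j : I) F j) x.
Proof. by move=> Fx; rewrite (bigD1 i) //=; left. Qed.

Lemma sym_sub (VA VS : finType) (U : Type) (S : ((VA + VS)%type -> set U) -> set U)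
  (D D' : (VA + VS)%type -> set U) :
  (forall x, (forall v, D v x <-> D' v x) -> (S D x <-> S D' x)) ->
  symdiff (S D) (S D') `<=` \big[setU/set0]_(v : (VA + VS)%type) symdiff (D v) (D' v).
Proof.
move=> HS x Hx.
have [v Hv] : exists v, ~ (D v x <-> D' v x).
  apply: contrapT => Hn.
  have Hall : forall v, D v x <-> D' v x.
    move=> v; apply: contrapT => Hv; apply: Hn; by exists v.
  move: (HS x Hall) Hx => [h1 h2] [[a b]|[a b]]; [exact: b (h1 a)| exact: b (h2 a)].
apply: (@in_bigU _ _ (fun w => symdiff (D w) (D' w)) v).
case: (pselect (D v x)) => Dv; case: (pselect (D' v x)) => D'v.
- by exfalso; apply: Hv.
- by left.
- by right.
- by exfalso; apply: Hv.
Qed.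

Lemma mdiff_S (VA VS : finType) d (T : measurableType d) (R : realType)
  (mu : {measure set T -> \bar R}) (S : ((VA + VS)%type -> set T) -> set T)
  (D D' : (VA + VS)%type -> set T) :
  mu setT = 1%E -> (forall v, measurable (D v)) -> (forall v, measurable (D' v)) ->
  measurable (S D) -> measurable (S D') ->
  (forall x, (forall v, D v x <-> D' v x) -> (S D x <-> S D' x)) ->
  `|fine (mu (S D)) - fine (mu (S D'))| <= fine (data_dist mu D D').
Proof.
move=> H1 mD mD' mS mS' HS.
apply: (le_trans (mdiff H1 mS mS')).
have mU : measurable (\big[setU/set0]_(v : (VA + VS)%type) symdiff (D v) (D' v)).
  by apply: bigsetU_measurable => v _; apply: symdiff_meas.
rewrite -lee_fin mu_fin //; last exact: symdiff_meas.
have ddfin : data_dist mu D D' \is a fin_num.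
  rewrite /data_dist -EFin_sum_fine //.
  by move=> v _; rewrite -(mu_fin H1) //; exact: symdiff_meas.
rewrite fineK //.
apply: le_trans (mu_bigU_le _ _ _ (fun v => symdiff_meas (mD v) (mD' v))).
apply: le_measure; rewrite ?inE //; first exact: symdiff_meas.
exact: sym_sub.
Qed.
Lemma divb (R : realFieldType) (a y c e : R) : 0 < c -> c <= y -> 0 <= a <= e -> a / y <= e / c.
Proof.
move=> c0 cy /andP[a0 ae].
have y0 : 0 < y by apply: lt_le_trans cy.
apply: ler_pM => //; first by rewrite invr_ge0 ltW.
by rewrite lef_pV2 // ?posrE.
Qed.
Lemma div_lip (R : realFieldType) (x y x' y' c e : R) : 0 < c -> c <= y -> c <= y' ->
  0 <= x' <= y' -> `|x - x'| <= e -> `|y - y'| <= e -> `|x/y - x'/y'| <= (e + e)/c.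
Proof.
move=> c0 cy cy' /andP[x0 xy] hx hy.
have y0 : 0 < y by apply: lt_le_trans cy.
have y0' : 0 < y' by apply: lt_le_trans cy'.
have E : x/y - x'/y' = (x - x')/y + (x'/y') * ((y' - y)/y).
  by field; rewrite ?gt_eqF.
have q1 : 0 <= x'/y' <= 1.
  apply/andP; split; first by rewrite divr_ge0 // ltW.
  by rewrite -(divff (lt0r_neq0 y0')) ler_wpM2r // invr_ge0 ltW.
rewrite E [(e + e) / c]mulrDl; apply: (le_trans (ler_normD _ _)); apply: lerD.
  by rewrite normrM normfV (gtr0_norm y0); apply: divb => //; rewrite normr_ge0.
rewrite normrM; case/andP: q1 => q0 q1.
rewrite (ger0_norm q0) -[e / c]mul1r; apply: ler_pM => //.
by rewrite normrM normfV (gtr0_norm y0); apply: divb => //; rewrite normr_ge0 -normrN opprB hy.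
Qed.

Lemma y_ge (R : realType) (VA VS : finType) d (T : measurableType d)
  (mu : {measure set T -> \bar R}) (D : (VA + VS)%type -> set T) (eps delta : R)
  (p : sequent VA VS) :
  0 < eps <= 1 -> 0 < delta <= 1 -> mu setT = 1%E -> (forall v, measurable (D v)) ->
  granular mu D eps -> inSdelta mu D delta p -> delta * eps <= fine (mu (A_ D p.1)).
Proof.
move=> /andP[e0 e1] /andP[d0 d1] H1 mD gD Sp.
case: (pickP (fun a => a \in p.1)) => [a Ha | H0].
  move: Sp => /forallP/(_ a)/implyP/(_ Ha).
  have ez : eps < fine (mu (D (inl a))).
    by rewrite -lte_fin (mu_fin H1 (mD _)); exact: gD.
  have z0 : 0 < fine (mu (D (inl a))) by apply: lt_trans ez.
  rewrite ltr_pdivlMr // => h.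
  apply: le_trans (ltW h); apply: ler_wpM2l; [exact: ltW | exact: ltW].
have -> : A_ D p.1 = setT.
  by apply/funext => x; apply/propext; split => // _ a; rewrite H0.
rewrite H1 /=; apply: mulr_ile1 => //; exact: ltW.
Qed.

Lemma ratio_diff (R : realType) (VA VS : finType) d (T : measurableType d)
  (mu : {measure set T -> \bar R}) (D D' : (VA + VS)%type -> set T) (eps delta : R)
  (p : sequent VA VS) :
  0 < eps <= 1 -> 0 < delta <= 1 -> mu setT = 1%E ->
  (forall v, measurable (D v)) -> (forall v, measurable (D' v)) ->
  granular mu D eps -> granular mu D' eps ->
  inSdelta mu D delta p -> inSdelta mu D' delta p ->
  `|Defs.ratio mu D p - Defs.ratio mu D' p| <=
    (fine (data_dist mu D D') + fine (data_dist mu D D')) / (delta * eps).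
Proof.
move=> he hd H1 mD mD' gD gD' Sp Sp'.
have c0 : 0 < delta * eps.
  by case/andP: he => e0 _; case/andP: hd => d0 _; exact: mulr_gt0.
have mI : forall E : (VA + VS)%type -> set T, (forall v, measurable (E v)) ->
    measurable (A_ E p.1 `&` U_ E p.2).
  by move=> E mE; apply: measurableI; [exact: A_meas | exact: U_meas].
rewrite /Defs.ratio; apply: div_lip => //.
- exact: y_ge gD Sp.
- exact: y_ge gD' Sp'.
- apply/andP; split; first exact: fine_ge0.
  rewrite -lee_fin (mu_fin H1 (mI _ mD')) (mu_fin H1 (A_meas _ mD')).
  by apply: le_measure; rewrite ?inE; [exact: mI|exact: A_meas|exact: subIsetl].
- apply: (mdiff_S (S := fun E => A_ E p.1 `&` U_ E p.2)) => //; try exact: mI.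
  move=> x Hx; split.
    move=> [hA [s Hs Hx']]; split; first by move=> a Ha; apply/Hx; exact: hA.
    by exists s => //; apply/Hx.
  move=> [hA [s Hs Hx']]; split; first by move=> a Ha; apply/Hx; exact: hA.
  by exists s => //; apply/Hx.
- apply: (mdiff_S (S := fun E => A_ E p.1)) => //; try exact: A_meas.
  by move=> x Hx; split => hA a Ha; apply/Hx; exact: hA.
Qed.

Lemma half (R : realType) (VA VS : finType) d (T : measurableType d)
  (mu : {measure set T -> \bar R}) (D1 D2 : (VA + VS)%type -> set T) (delta : R)
  (p : sequent VA VS) (t : R) :
  (forall q, inSdelta mu D1 delta q = inSdelta mu D2 delta q) ->
  Ip mu D1 delta p t -> ~ Ip mu D2 delta p t ->
  exists q, inSdelta mu D1 delta q /\
    Num.min (Defs.ratio mu D1 q) (Defs.ratio mu D2 q) <= 1 - t <=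
    Num.max (Defs.ratio mu D1 q) (Defs.ratio mu D2 q).
Proof.
move=> HS [t01 [/andP [Fp Sp] Hmin]] Hn.
case: (boolP (Fdelta mu D2 delta t p)) => F2.
  have [q /andP [Fq lt]] : exists q, Fdelta mu D2 delta t q && seq_lt q p.
    apply: contrapT => Hq; apply: Hn; split => //; split => // q Fq.
    apply/negP => lt; apply: Hq; exists q; by rewrite Fq lt.
  move: Fq => /andP [Pq Sq].
  have S1q : inSdelta mu D1 delta q by rewrite HS.
  have nF1 : ~~ Fdelta mu D1 delta t q.
    by apply/negP => F1; move: (Hmin q F1); rewrite lt.
  move: nF1; rewrite /Fdelta S1q andbT /inSprime -ltNge => h.
  exists q; split => //; apply/andP; split.
    by rewrite ge_min (ltW h).
  by rewrite le_max; move: Pq; rewrite /inSprime => ->; rewrite orbT.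
move: F2; rewrite /Fdelta -HS Sp andbT /inSprime -ltNge => h.
exists p; split => //; apply/andP; split.
  by rewrite ge_min (ltW h) orbT.
by rewrite le_max; move: Fp; rewrite /inSprime => ->.
Qed.

Lemma itv_le (R : realType) (a b : R) :
  (lebesgue_measure ([set` (`[(1 - Num.max a b)%R, (1 - Num.min a b)%R]%R : interval R)] : set R)
     <= (`|a - b|)%:E)%E.
Proof.
rewrite lebesgue_measure_itv /=.
have hm : Num.max a b - Num.min a b <= `|a - b|.
  case: (leP a b) => h.
    by rewrite distrC ler_norm.
  by rewrite ler_norm.
case: ifP => _; last by rewrite lee_fin normr_ge0.
rewrite -EFinB lee_fin; apply: le_trans hm; lra.
Qed.

Lemma sum_const_le (R : realType) (I : finType) (P : pred I) (k : R) : 0 <= k ->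
  (\sum_(i | P i) k%:E <= (#|I|%:R * k)%:E)%E.
Proof.
move=> k0; rewrite sumEFin lee_fin big_mkcond /=.
apply: le_trans (_ : \sum_(i : I) k <= _).
  by apply: ler_sum => i _; case: (P i).
by rewrite sumr_const mulr_natl.
Qed.

Theorem mainTheorem1 (R : realType) (eps delta : R) :
  0 < eps <= 1 -> 0 < delta <= 1 ->
  forall nA nS : nat,
  exists C : R, 0 < C /\
    forall (VA VS : finType), #|VA| = nA -> #|VS| = nS ->
    forall (d : measure_display) (T : measurableType d)
           (mu : {measure set T -> \bar R}),
    mu setT = 1%E ->
    forall D D' : (VA + VS)%type -> set T,
    (forall v, measurable (D v)) -> (forall v, measurable (D' v)) ->
    granular mu D eps -> granular mu D' eps ->
    (forall p : sequent VA VS, inSdelta mu D delta p = inSdelta mu D' delta p) ->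
    (barcode_dist mu D D' delta <= C%:E * data_dist mu D D')%E.
Proof.
move=> he hd nA nS.
have c0 : 0 < delta * eps.
  by case/andP: he => e0 _; case/andP: hd => d0 _; exact: mulr_gt0.
pose N := (2 ^ nA * 2 ^ nS)%N.
exists ((N * N)%:R * (2 / (delta * eps)) + 1).
split.
  have : 0 <= (N * N)%:R * (2 / (delta * eps)) by rewrite mulr_ge0 // divr_ge0 // ltW.
  lra.
move=> VA VS cA cS d T mu H1 D D' mD mD' gD gD' HS.
pose dd := fine (data_dist mu D D').
have ddfin : data_dist mu D D' = dd%:E.
  rewrite /dd fineK // /data_dist -EFin_sum_fine // => v _.
  by rewrite -(mu_fin H1) //; exact: symdiff_meas.
have dd0 : 0 <= dd by apply: fine_ge0; apply: sume_ge0 => v _; exact: measure_ge0.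
pose k := (dd + dd) / (delta * eps).
have k0 : 0 <= k by rewrite divr_ge0 // ?addr_ge0 // ltW.
have cardN : #|{: sequent VA VS}| = N.
  by rewrite /sequent card_prod !card_setT cA cS.
have step : forall p, inSdelta mu D delta p ->
    (lebesgue_measure (symdiff (Ip mu D delta p) (Ip mu D' delta p)) <= (N%:R * k)%:E)%E.
  move=> p Sp.
  pose J (q : sequent VA VS) := ([set` (`[(1 - Num.max (Defs.ratio mu D q) (Defs.ratio mu D' q))%R,
      (1 - Num.min (Defs.ratio mu D q) (Defs.ratio mu D' q))%R]%R : interval R)] : set R).
  apply: (le_trans (_ : _ <= lebesgue_measure (\big[setU/set0]_(q | inSdelta mu D delta q) J q))%E).
    apply: leb_mono => t [[It nIt]|[It nIt]].
    - have [q [Sq /andP[h1 h2]]] := half HS It nIt.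
      apply: (in_bigUP Sq); rewrite /J /= in_itv /=; apply/andP; split; lra.
    - have HS' : forall q, inSdelta mu D' delta q = inSdelta mu D delta q by move=> q; rewrite HS.
      have [q [Sq /andP[h1 h2]]] := half HS' It nIt.
      rewrite -HS in Sq; rewrite minC in h1; rewrite maxC in h2.
      apply: (in_bigUP Sq); rewrite /J /= in_itv /=; apply/andP; split; lra.
  apply: le_trans; first by apply: mu_bigU_le => q; exact: measurable_itv.
  apply: (le_trans (_ : _ <= \sum_(q | inSdelta mu D delta q) k%:E)%E); last first.
    by rewrite -cardN; exact: sum_const_le.
  apply: lee_sum => q Sq; apply: le_trans (itv_le _ _) _.
  rewrite lee_fin; apply: ratio_diff => //; by rewrite -HS.
rewrite /barcode_dist.
apply: (le_trans (_ : _ <= \sum_(p | inSdelta mu D delta p) (N%:R * k)%:E)%E).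
  by apply: lee_sum => p Sp; exact: step.
apply: le_trans; first by apply: sum_const_le; apply: mulr_ge0 => //; exact: ler0n.
rewrite cardN ddfin -EFinM lee_fin.
have E : N%:R * (N%:R * k) = ((N * N)%:R * (2 / (delta * eps))) * dd.
  rewrite /k natrM; field.
  by case/andP: he => e0 _; case/andP: hd => d0 _; rewrite !lt0r_neq0.
rewrite E mulrDl mul1r; have := dd0; lra.
Qed.
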